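(* Let $\Pi\subseteq\mathsf{pGCL}$ and $\Xi\subseteq\mathbb{E}$, and let $\mathfrak{C}$ be a verification condition provider. (1) If $\mathfrak{C}$ is demonically complete w.r.t. $(\Pi,\Xi)$ and $\mathrm{trans}^{\preceq}_{\mathrm{dwp}}$ preserves $\mathfrak{C}$, then for all $C\in\Pi$ and $f\in\Xi$ there exist invariant annotations for the loops of $C$ such that for all $C'\in\mathsf{pGCL}$: $C'\multimap\mathrm{trans}^{\preceq}_{\mathrm{dwp}}[\![C]\!](f)$ implies $\mathrm{dwp}[\![C]\!](f)=\mathrm{dwp}[\![C']\!](f)$. (2) If $\mathfrak{C}$ is angelically complete w.r.t. $(\Pi,\Xi)$ and $\mathrm{trans}^{\succeq}_{\mathrm{awp}}$ preserves $\mathfrak{C}$, then for every $C\in\Pi$ and $f\in\Xi$ there exist invariant annotations for $C$ such that for all $C'\in\mathsf{pGCL}$: $C'\multimap\mathrm{trans}^{\succeq}_{\mathrm{awp}}[\![C]\!](f)$ implies $\mathrm{awp}[\![C]\!](f)=\mathrm{awp}[\![C']\!](f)$.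
   Context: States: fix a countably infinite set of program variables with values in $\mathbb{Q}_{\ge 0}$; a state is a map $\sigma$ from variables to $\mathbb{Q}_{\ge0}$ which is $0$ for all but finitely many variables; $\mathsf{States}$ is the set of states. A predicate is a map $\varphi:\mathsf{States}\to\{\mathsf{true},\mathsf{false}\}$; $\varphi\models\psi$ means every state satisfying $\varphi$ satisfies $\psi$; $\models\varphi$ means $\varphi$ holds in every state; $\varphi\Rightarrow\psi$ is the usual implication. Expectations: $\mathbb{E}$ is the set of maps $\mathsf{States}\to[0,\infty]$, ordered pointwise; $+,\cdot$ pointwise with $0\cdot\infty=0$; $\sqcap,\sqcup$ pointwise min/max; $[\varphi]$ Iverson bracket; $(\varphi\to g)(\sigma)=g(\sigma)$ if $\sigma\models\varphi$, else $\infty$; $f[x/E](\sigma)=f(\sigma[x\mapsto E(\sigma)])$. Programs of $\mathsf{pGCL}$: $C ::= \mathtt{skip} \mid x:=E \mid C;C \mid \mathtt{if}\ \varphi_1\to C\ \square\ \varphi_2\to C \mid \{C\}[p]\{C\} \mid \mathtt{while}(\varphi)\{C\}[I]$, where $E:\mathsf{States}\to\mathbb{Q}_{\ge0}$, $p:\mathsf{States}\to[0,1]$, in every guarded choice $\varphi_1\vee\varphi_2$ is valid, and every loop carries an invariant annotation $I\in\mathbb{E}$. Weakest preexpectations for $\mathcal{T}\in\{\mathrm{dwp},\mathrm{awp}\}$: $\mathcal{T}[\![\mathtt{skip}]\!](f)=f$; $\mathcal{T}[\![x:=E]\!](f)=f[x/E]$; $\mathcal{T}[\![C_1;C_2]\!](f)=\mathcal{T}[\![C_1]\!](\mathcal{T}[\![C_2]\!](f))$;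 $\mathrm{dwp}$ of a guarded choice: $(\varphi_1\to\mathrm{dwp}[\![C_1]\!](f))\sqcap(\varphi_2\to\mathrm{dwp}[\![C_2]\!](f))$; $\mathrm{awp}$ of a guarded choice: $[\varphi_1]\cdot\mathrm{awp}[\![C_1]\!](f)\sqcup[\varphi_2]\cdot\mathrm{awp}[\![C_2]\!](f)$; $\mathcal{T}[\![\{C_1\}[p]\{C_2\}]\!](f)=p\cdot\mathcal{T}[\![C_1]\!](f)+(1-p)\cdot\mathcal{T}[\![C_2]\!](f)$; loops: least fixpoint of $g\mapsto[\neg\varphi]\cdot f+[\varphi]\cdot\mathcal{T}[\![C']\!](g)$. The auxiliary transformer $\mathcal{T}^*$ follows the same rules except $\mathcal{T}^*[\![\mathtt{while}(\varphi)\{C'\}[I]]\!](f)=I$. Implementation relation $\multimap$: the smallest partial order on $\mathsf{pGCL}$ closed under: if $C_1'\multimap C_1$, $C_2'\multimap C_2$ then $C_1';C_2'\multimap C_1;C_2$ and $\{C_1'\}[p]\{C_2'\}\multimap\{C_1\}[p]\{C_2\}$; if moreover $\varphi_1'\models\varphi_1$, $\varphi_2'\models\varphi_2$, $\models\varphi_1'\vee\varphi_2'$ then $\mathtt{if}\ \varphi_1'\to C_1'\ \square\ \varphi_2'\to C_2'\multimap\mathtt{if}\ \varphi_1\to C_1\ \square\ \varphi_2\to C_2$; if $C'\multimap C$ then $\mathtt{while}(\varphi)\{C'\}\multimap\mathtt{while}(\varphi)\{C\}$. Verification conditions: a verification condition provider is a map $\mathfrak{C}$ assigning to each annotated loop and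 each $f\in\mathbb{E}$ a truth value. $\mathrm{vc}^{\mathfrak{C},\mathcal{T}}[\![C]\!](f)$ is defined inductively: $\mathsf{true}$ for $\mathtt{skip}$ and assignments; $\mathrm{vc}[\![C_1]\!](\mathcal{T}^*[\![C_2]\!](f))\wedge\mathrm{vc}[\![C_2]\!](f)$ for $C_1;C_2$; $\mathrm{vc}[\![C_1]\!](f)\wedge\mathrm{vc}[\![C_2]\!](f)$ for guarded and probabilistic choices; $\mathfrak{C}(\mathtt{while}(\varphi)\{C'\}[I],f)\wedge\mathrm{vc}[\![C']\!](I)$ for loops. $\mathfrak{C}$ yields upper (resp. lower) bounds for $\mathcal{T}$ if for all $C$, $f$, $\mathrm{vc}^{\mathfrak{C},\mathcal{T}}[\![C]\!](f)$ implies $\mathcal{T}[\![C]\!](f)\le\mathcal{T}^*[\![C]\!](f)$ (resp. $\ge$). Completeness: $\mathfrak{C}$ is demonically (resp. angelically) complete w.r.t. $(\Pi,\Xi)$ if (i) $\mathfrak{C}$ yields upper bounds for $\mathrm{dwp}$ (resp. lower bounds for $\mathrm{awp}$) and (ii) for all $C\in\Pi$, $f\in\Xi$, the loops of $C$ can be annotated with invariants such that $\mathrm{vc}^{\mathfrak{C},\mathrm{dwp}}[\![C]\!](f)$ holds and $\mathrm{dwp}[\![C]\!](f)=\mathrm{dwp}^*[\![C]\!](f)$ (resp. $\mathrm{vc}^{\mathfrak{C},\mathrm{awp}}[\![C]\!](f)$ holds and $\mathrm{awp}[\![C]\!](f)=\mathrm{awp}^*[\![C]\!](f)$). Comparison predicates: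 $f\preceq g$ true at $\sigma$ iff $f(\sigma)\le g(\sigma)$; $f\succeq g$ true at $\sigma$ iff $f(\sigma)\ge g(\sigma)$. Transformer $\mathrm{trans}^{\bowtie}_{\mathcal{T}}$: $\mathtt{skip}$ and assignments unchanged; $C_1;C_2\mapsto \mathrm{trans}^{\bowtie}_{\mathcal{T}}[\![C_1]\!](\mathcal{T}^*[\![C_2]\!](f));\mathrm{trans}^{\bowtie}_{\mathcal{T}}[\![C_2]\!](f)$; guarded choice $\mapsto \mathtt{if}\ \psi_1\to\mathrm{trans}^{\bowtie}_{\mathcal{T}}[\![C_1]\!](f)\ \square\ \psi_2\to\mathrm{trans}^{\bowtie}_{\mathcal{T}}[\![C_2]\!](f)$ with $\psi_1=\varphi_1\wedge(\varphi_2\Rightarrow \mathcal{T}^*[\![C_1]\!](f)\bowtie\mathcal{T}^*[\![C_2]\!](f))$, $\psi_2=\varphi_2\wedge(\varphi_1\Rightarrow \mathcal{T}^*[\![C_2]\!](f)\bowtie\mathcal{T}^*[\![C_1]\!](f))$; probabilistic choice transformed branchwise with the same $f$; $\mathtt{while}(\varphi)\{C'\}[I]\mapsto\mathtt{while}(\varphi)\{\mathrm{trans}^{\bowtie}_{\mathcal{T}}[\![C']\!](I)\}[I]$. Preservation: $\mathrm{trans}^{\preceq}_{\mathrm{dwp}}$ preserves $\mathfrak{C}$ if for all $C,C'$, $f$: $\mathrm{vc}^{\mathfrak{C},\mathrm{dwp}}[\![C]\!](f)$ and $C'\multimap\mathrm{trans}^{\preceq}_{\mathrm{dwp}}[\![C]\!](f)$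 imply $\mathrm{vc}^{\mathfrak{C},\mathrm{dwp}}[\![C']\!](f)$; analogously for $\mathrm{trans}^{\succeq}_{\mathrm{awp}}$ with $\mathrm{awp}$. *)

(* Defs.v *)
From HB Require Import structures.
From mathcomp Require Import all_boot all_order all_algebra.
From Stdlib Require Import Rdefinitions.
From mathcomp Require Import boolp classical_sets reals constructive_ereal ereal Rstruct.

Set Implicit Arguments.
Unset Strict Implicit.
Unset Printing Implicit Defensive.

Import Order.TTheory GRing.Theory Num.Theory.
Local Open Scope ring_scope.

Definition qnn := {q : rat | 0 <= q}.
Definition qnn0 : qnn := exist _ 0 (lexx 0).

Definition state :=
  {s : nat -> qnn | exists n : nat, forall x : nat, leq n x -> s x = qnn0}.

Lemma upd_fin (s : state) (x : nat) (v : qnn) :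
  exists n : nat, forall y : nat, leq n y ->
    (if y == x then v else proj1_sig s y) = qnn0.
Proof.
case: (proj2_sig s) => n Hn; exists (maxn n x.+1) => y Hy.
have Hxy : (y == x) = false.
  by apply/negbTE; apply/eqP => Exy; move: Hy; rewrite Exy geq_max ltnn andbF.
rewrite Hxy; apply: Hn; exact: leq_trans (leq_maxl n x.+1) Hy.
Qed.

Definition upd (s : state) (x : nat) (v : qnn) : state :=
  exist _ (fun y => if y == x then v else proj1_sig s y) (upd_fin s x v).

Definition pred_st := state -> bool.

Definition entails (phi psi : pred_st) : Prop := forall s, phi s -> psi s.
Definition valid (phi : pred_st) : Prop := forall s, phi s.

Definition aexp := state -> qnn.

Definition prob := {r : R | (0 <= r) && (r <= 1)}.
Definition pexp := state -> prob.

Local Open Scope ereal_scope.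

Definition ennr := {x : \bar R | 0 <= x}.

Definition ev (x : ennr) : \bar R := proj1_sig x.

Definition ennr_le (x y : ennr) : bool := ev x <= ev y.

Definition ennr0 : ennr := exist _ 0 (lexx 0).
Definition ennr1 : ennr := exist _ 1 lee01.
Definition ennr_inf : ennr := exist _ +oo (leey 0).

Definition ennr_add (x y : ennr) : ennr :=
  exist _ (ev x + ev y) (adde_ge0 (proj2_sig x) (proj2_sig y)).

(* multiplication with 0 * oo = 0 (convention of mathcomp's mule) *)
Definition ennr_mul (x y : ennr) : ennr :=
  exist _ (ev x * ev y) (mule_ge0 (proj2_sig x) (proj2_sig y)).

Lemma min_ge0 (x y : ennr) : 0 <= Order.min (ev x) (ev y).
Proof. by rewrite le_min (proj2_sig x) (proj2_sig y). Qed.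
Lemma max_ge0 (x y : ennr) : 0 <= Order.max (ev x) (ev y).
Proof. by rewrite le_max (proj2_sig x). Qed.

Definition ennr_min (x y : ennr) : ennr := exist (fun z : \bar R => 0 <= z) _ (min_ge0 x y).
Definition ennr_max (x y : ennr) : ennr := exist (fun z : \bar R => 0 <= z) _ (max_ge0 x y).

Lemma prob_ge0 (p : prob) : 0 <= (proj1_sig p)%:E.
Proof. by rewrite lee_fin; move: (proj2_sig p) => /ssrbool.andP []. Qed.
Lemma probc_ge0 (p : prob) : 0 <= (1 - proj1_sig p)%:E.
Proof. by rewrite lee_fin subr_ge0; move: (proj2_sig p) => /ssrbool.andP []. Qed.
Definition ennr_of_prob (p : prob) : ennr := exist (fun z : \bar R => 0 <= z) _ (prob_ge0 p).
Definition ennr_of_probc (p : prob) : ennr := exist (fun z : \bar R => 0 <= z) _ (probc_ge0 p).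

Lemma inf_ge0 (S : set ennr) : 0 <= ereal_inf [set ev x | x in S].
Proof. by apply: le_ereal_inf_tmp => _ [x _ <-]; exact: (proj2_sig x). Qed.
Definition ennr_infimum (S : set ennr) : ennr := exist (fun z : \bar R => 0 <= z) _ (inf_ge0 S).

Definition expect := state -> ennr.

Definition exp_le (f g : expect) : Prop := forall s, ennr_le (f s) (g s).

Definition iverson (phi : pred_st) : expect :=
  fun s => if phi s then ennr1 else ennr0.

Definition guard_exp (phi : pred_st) (g : expect) : expect :=
  fun s => if phi s then g s else ennr_inf.

Definition subst (f : expect) (x : nat) (E : aexp) : expect :=
  fun s => f (upd s x (E s)).

(* least fixpoint of a (monotone) transformer on expectations,
   given by the Knaster--Tarski formula: pointwise infimum of all
   prefixed points *)
Definition lfp (Phi : expect -> expect) : expect :=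
  fun s => ennr_infimum [set g s | g in [set g | exp_le (Phi g) g]].

Close Scope ereal_scope.

Inductive pgcl : Type :=
| Skip : pgcl
| Assign : nat -> aexp -> pgcl
| Seq : pgcl -> pgcl -> pgcl
| If : pred_st -> pgcl -> pred_st -> pgcl -> pgcl
| Prob : pgcl -> pexp -> pgcl -> pgcl
| While : pred_st -> pgcl -> expect -> pgcl.           (* while(phi){C}[I] *)

(* membership in pGCL: in every guarded choice phi1 \/ phi2 is valid *)
Fixpoint wf (C : pgcl) : Prop :=
  match C with
  | Skip | Assign _ _ => True
  | Seq C1 C2 => wf C1 /\ wf C2
  | If phi1 C1 phi2 C2 => valid (fun s => phi1 s || phi2 s) /\ wf C1 /\ wf C2
  | Prob C1 _ C2 => wf C1 /\ wf C2
  | While _ C' _ => wf C'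
  end.

Fixpoint reannot (C D : pgcl) : Prop :=
  match C, D with
  | Skip, Skip => True
  | Assign x E, Assign y E' => x = y /\ E = E'
  | Seq C1 C2, Seq D1 D2 => reannot C1 D1 /\ reannot C2 D2
  | If p1 C1 p2 C2, If q1 D1 q2 D2 =>
      p1 = q1 /\ p2 = q2 /\ reannot C1 D1 /\ reannot C2 D2
  | Prob C1 p C2, Prob D1 q D2 => p = q /\ reannot C1 D1 /\ reannot C2 D2
  | While phi C' _, While psi D' _ => phi = psi /\ reannot C' D'
  | _, _ => False
  end.

Inductive tmode := Dwp | Awp.

(* wpT T false = T (dwp or awp);  wpT T true = T^* (loops yield their invariant) *)
Fixpoint wpT (T : tmode) (star : bool) (C : pgcl) (f : expect) : expect :=
  match C with
  | Skip => f
  | Assign x E => subst f x E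
  | Seq C1 C2 => wpT T star C1 (wpT T star C2 f)
  | If phi1 C1 phi2 C2 =>
      match T with
      | Dwp => fun s => ennr_min (guard_exp phi1 (wpT T star C1 f) s)
                                 (guard_exp phi2 (wpT T star C2 f) s)
      | Awp => fun s => ennr_max (ennr_mul (iverson phi1 s) (wpT T star C1 f s))
                                 (ennr_mul (iverson phi2 s) (wpT T star C2 f s))
      end
  | Prob C1 p C2 =>
      fun s => ennr_add (ennr_mul (ennr_of_prob (p s)) (wpT T star C1 f s))
                        (ennr_mul (ennr_of_probc (p s)) (wpT T star C2 f s))
  | While phi C' Inv =>
      if star then Inv
      else lfp (fun g s =>
             ennr_add (ennr_mul (iverson (fun t => ~~ phi t) s) (f s))
                      (ennr_mul (iverson phi s) (wpT T star C' g s)))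
  end.

Definition dwp := wpT Dwp false.
Definition dwp_star := wpT Dwp true.
Definition awp := wpT Awp false.
Definition awp_star := wpT Awp true.

Inductive impl : pgcl -> pgcl -> Prop :=
| impl_refl C : impl C C
| impl_trans C1 C2 C3 : impl C1 C2 -> impl C2 C3 -> impl C1 C3
| impl_seq C1' C1 C2' C2 :
    impl C1' C1 -> impl C2' C2 -> impl (Seq C1' C2') (Seq C1 C2)
| impl_prob C1' C1 C2' C2 p :
    impl C1' C1 -> impl C2' C2 -> impl (Prob C1' p C2') (Prob C1 p C2)
| impl_if C1' C1 C2' C2 phi1' phi1 phi2' phi2 :
    impl C1' C1 -> impl C2' C2 ->
    entails phi1' phi1 -> entails phi2' phi2 ->
    valid (fun s => phi1' s || phi2' s) ->
    impl (If phi1' C1' phi2' C2') (If phi1 C1 phi2 C2)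
| impl_while phi C' C Inv :
    impl C' C -> impl (While phi C' Inv) (While phi C Inv).

(* a VC provider assigns a truth value to each annotated loop
   while(phi){C'}[I] and each expectation f *)
Definition vcprovider := pred_st -> pgcl -> expect -> expect -> Prop.

Fixpoint vc (P : vcprovider) (T : tmode) (C : pgcl) (f : expect) : Prop :=
  match C with
  | Skip | Assign _ _ => True
  | Seq C1 C2 => vc P T C1 (wpT T true C2 f) /\ vc P T C2 f
  | If _ C1 _ C2 => vc P T C1 f /\ vc P T C2 f
  | Prob C1 _ C2 => vc P T C1 f /\ vc P T C2 f
  | While phi C' Inv => P phi C' Inv f /\ vc P T C' Inv
  end.

Definition upper_bounds_dwp (P : vcprovider) : Prop :=
  forall C f, wf C -> vc P Dwp C f -> exp_le (dwp C f) (dwp_star C f).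

Definition lower_bounds_awp (P : vcprovider) : Prop :=
  forall C f, wf C -> vc P Awp C f -> exp_le (awp_star C f) (awp C f).

Definition demonically_complete (P : vcprovider)
    (Pi : pgcl -> Prop) (Xi : expect -> Prop) : Prop :=
  upper_bounds_dwp P /\
  forall C f, Pi C -> Xi f ->
    exists D, reannot C D /\ vc P Dwp D f /\ dwp D f = dwp_star D f.

Definition angelically_complete (P : vcprovider)
    (Pi : pgcl -> Prop) (Xi : expect -> Prop) : Prop :=
  lower_bounds_awp P /\
  forall C f, Pi C -> Xi f ->
    exists D, reannot C D /\ vc P Awp D f /\ awp D f = awp_star D f.

Definition cmp_preceq (f g : expect) : pred_st := fun s => ennr_le (f s) (g s).
Definition cmp_succeq (f g : expect) : pred_st := fun s => ennr_le (g s) (f s).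

Fixpoint trans (T : tmode) (cmp : expect -> expect -> pred_st)
    (C : pgcl) (f : expect) : pgcl :=
  match C with
  | Skip => Skip
  | Assign x E => Assign x E
  | Seq C1 C2 => Seq (trans T cmp C1 (wpT T true C2 f)) (trans T cmp C2 f)
  | If phi1 C1 phi2 C2 =>
      let psi1 := fun s => phi1 s && (phi2 s ==> cmp (wpT T true C1 f) (wpT T true C2 f) s) in
      let psi2 := fun s => phi2 s && (phi1 s ==> cmp (wpT T true C2 f) (wpT T true C1 f) s) in
      If psi1 (trans T cmp C1 f) psi2 (trans T cmp C2 f)
  | Prob C1 p C2 => Prob (trans T cmp C1 f) p (trans T cmp C2 f)
  | While phi C' Inv => While phi (trans T cmp C' Inv) Inv
  end.

Definition trans_dwp := trans Dwp cmp_preceq.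
Definition trans_awp := trans Awp cmp_succeq.

Definition preserves_dwp (P : vcprovider) : Prop :=
  forall C C' f, wf C -> wf C' ->
    vc P Dwp C f -> impl C' (trans_dwp C f) -> vc P Dwp C' f.

Definition preserves_awp (P : vcprovider) : Prop :=
  forall C C' f, wf C -> wf C' ->
    vc P Awp C f -> impl C' (trans_awp C f) -> vc P Awp C' f.

(* Main.v *)
Require Import Defs.
From HB Require Import structures.
From mathcomp Require Import all_boot all_order all_algebra.
From Stdlib Require Import Rdefinitions.
From mathcomp Require Import boolp classical_sets reals constructive_ereal ereal Rstruct.

Set Implicit Arguments.
Unset Strict Implicit.
Unset Printing Implicit Defensive.
Import Order.TTheory GRing.Theory Num.Theory.
Local Open Scope ereal_scope.

Lemma ev_ge0 (x : ennr) : 0 <= ev x.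
Proof. exact: (proj2_sig x). Qed.

Lemma ennr_le_refl x : ennr_le x x.
Proof. exact: lexx. Qed.

Lemma ennr_le_trans x y z : ennr_le x y -> ennr_le y z -> ennr_le x z.
Proof. exact: le_trans. Qed.

Lemma exp_le_refl f : exp_le f f.
Proof. by move=> s; exact: ennr_le_refl. Qed.

Lemma exp_le_trans f g h : exp_le f g -> exp_le g h -> exp_le f h.
Proof. by move=> H1 H2 s; exact: ennr_le_trans (H1 s) (H2 s). Qed.

Lemma exp_eq f g : exp_le f g -> exp_le g f -> f = g.
Proof.
move=> H1 H2; apply: funext => s; move: (H1 s) (H2 s).
rewrite /ennr_le /ev; case: (f s) => x hx; case: (g s) => y hy /= Hxy Hyx.
have E : x = y by apply: le_anti; rewrite Hxy Hyx.
subst y; congr exist; exact: eq_irrelevance.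
Qed.

Lemma add_mono a b c d : ennr_le a b -> ennr_le c d ->
  ennr_le (ennr_add a c) (ennr_add b d).
Proof. rewrite /ennr_le /=; exact: leeD. Qed.

Lemma mul_mono a b c d : ennr_le a b -> ennr_le c d ->
  ennr_le (ennr_mul a c) (ennr_mul b d).
Proof. rewrite /ennr_le /= => H1 H2; apply: lee_pmul => //; exact: ev_ge0. Qed.

Lemma min_mono a b c d : ennr_le a b -> ennr_le c d ->
  ennr_le (ennr_min a c) (ennr_min b d).
Proof.
rewrite /ennr_le /= => H1 H2; rewrite le_min; apply/andP; split; rewrite ge_min.
  by rewrite H1. by rewrite H2 orbT.
Qed.

Lemma max_mono a b c d : ennr_le a b -> ennr_le c d ->
  ennr_le (ennr_max a c) (ennr_max b d).
Proof.
rewrite /ennr_le /= => H1 H2; rewrite ge_max; apply/andP; split; rewrite le_max.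
  by rewrite H1. by rewrite H2 orbT.
Qed.

Lemma guard_mono p q a b s : entails q p -> exp_le a b ->
  ennr_le (guard_exp p a s) (guard_exp q b s).
Proof.
rewrite /guard_exp => Hqp Hab; case Hq: (q s).
  by rewrite (Hqp _ Hq); exact: Hab.
by rewrite /ennr_le /=; exact: leey.
Qed.

Lemma iv_mul_mono p q a b s : entails q p -> exp_le a b ->
  ennr_le (ennr_mul (iverson q s) (a s)) (ennr_mul (iverson p s) (b s)).
Proof.
rewrite /iverson => Hqp Hab; case Hq: (q s).
  rewrite (Hqp _ Hq); apply: mul_mono => //; exact: ennr_le_refl.
by rewrite /ennr_le /= mul0e; exact: mule_ge0 (ev_ge0 _) (ev_ge0 _).
Qed.

Lemma lfp_mono (Phi Psi : expect -> expect) :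
  (forall h, exp_le (Phi h) (Psi h)) -> exp_le (lfp Phi) (lfp Psi).
Proof.
move=> H s; rewrite /ennr_le /lfp /=.
apply: ereal_inf_le_tmp => _ [x [h Hh <-] <-].
exists (h s) => //; exists h => //.
exact: exp_le_trans (H h) Hh.
Qed.

Fixpoint implS (C' C : pgcl) {struct C'} : Prop :=
  match C', C with
  | Skip, Skip => True
  | Assign x E, Assign y E' => x = y /\ E = E'
  | Seq C1' C2', Seq C1 C2 => implS C1' C1 /\ implS C2' C2
  | If q1 C1' q2 C2', If p1 C1 p2 C2 =>
      entails q1 p1 /\ entails q2 p2 /\ implS C1' C1 /\ implS C2' C2
  | Prob C1' p C2', Prob C1 q C2 => p = q /\ implS C1' C1 /\ implS C2' C2
  | While phi C' J, While psi C J' => phi = psi /\ J = J' /\ implS C' C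
  | _, _ => False
  end.

Lemma implS_refl C : implS C C.
Proof. by elim: C => //= *; repeat split. Qed.

Lemma implS_trans A B C : implS A B -> implS B C -> implS A C.
Proof.
elim: A B C => [|x E|A1 IH1 A2 IH2|q1 A1 IH1 q2 A2 IH2|A1 IH1 p A2 IH2|phi A1 IH1 I]
  [|y E'|B1 B2|r1 B1 r2 B2|B1 p' B2|phi' B1 I'] [|z E''|C1 C2|s1 C1 s2 C2|C1 p'' C2|phi'' C1 I''] //=.
- by move=> [-> ->] [-> ->].
- by move=> [h1 h2] [h3 h4]; split; [exact: IH1 h1 h3 | exact: IH2 h2 h4].
- move=> [e1 [e2 [h1 h2]]] [e3 [e4 [h3 h4]]]; split; [|split; [|split]].
  + by move=> s /e1 /e3.
  + by move=> s /e2 /e4.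
  + exact: IH1 h1 h3.
  + exact: IH2 h2 h4.
- by move=> [-> [h1 h2]] [-> [h3 h4]]; split => //; split; [exact: IH1 h1 h3 | exact: IH2 h2 h4].
- by move=> [-> [-> h1]] [-> [-> h3]]; split => //; split => //; exact: IH1 h1 h3.
Qed.

Lemma impl_implS C' C : impl C' C -> implS C' C.
Proof.
elim => /=.
- exact: implS_refl.
- move=> ? ? ? _ h1 _ h2; exact: implS_trans h1 h2.
- by move=> *; split.
- by move=> *; split.
- by move=> *; repeat split.
- by move=> *; repeat split.
Qed.

Lemma trans_implS T cmp D f : implS (trans T cmp D f) D.
Proof.
elim: D f => [|x E|C1 IH1 C2 IH2|p1 C1 IH1 p2 C2 IH2|C1 IH1 p C2 IH2|phi C IH I] f /=.
- by [].
- by [].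
- by split.
- split; [|split; [|split]] => //.
  + by move=> s /andP [].
  + by move=> s /andP [].
- by split.
- by split.
Qed.

Lemma reannot_wf C D : reannot C D -> wf C -> wf D.
Proof.
elim: C D => [|x E|A1 IH1 A2 IH2|q1 A1 IH1 q2 A2 IH2|A1 IH1 p A2 IH2|phi A1 IH1 I]
  [|y E'|B1 B2|r1 B1 r2 B2|B1 p' B2|phi' B1 I'] //=.
- by move=> [h1 h2] [w1 w2]; split; [exact: IH1 | exact: IH2].
- by move=> [<- [<- [h1 h2]]] [v [w1 w2]]; split => //; split; [exact: IH1 | exact: IH2].
- by move=> [_ [h1 h2]] [w1 w2]; split; [exact: IH1 | exact: IH2].
- by move=> [_ h] w; exact: IH1.
Qed.

Lemma mono_dwp star C C' f g : implS C' C -> exp_le f g ->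
  exp_le (wpT Dwp star C f) (wpT Dwp star C' g).
Proof.
elim: C C' f g => [|x E|A1 IH1 A2 IH2|q1 A1 IH1 q2 A2 IH2|A1 IH1 p A2 IH2|phi A1 IH1 I]
  [|y E'|B1 B2|r1 B1 r2 B2|B1 p' B2|phi' B1 I'] f g //=.
- by move=> [<- <-] H s; exact: H.
- by move=> [h1 h2] H; apply: IH1 h1 _; exact: IH2.
- move=> [e1 [e2 [h1 h2]]] H s; apply: min_mono; apply: guard_mono => //.
  + exact: IH1.
  + exact: IH2.
- move=> [<- [h1 h2]] H s; apply: add_mono; apply: mul_mono;
    (try exact: ennr_le_refl); [exact: IH1 | exact: IH2].
- move=> [<- [<- h1]] H; move: IH1; case: star => IH1 /=; first exact: exp_le_refl.
  apply: lfp_mono => h s; apply: add_mono; apply: mul_mono;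
    (try exact: ennr_le_refl); [exact: H | exact: IH1 h1 (exp_le_refl h) s].
Qed.

Lemma mono_awp star C C' f g : implS C' C -> exp_le f g ->
  exp_le (wpT Awp star C' f) (wpT Awp star C g).
Proof.
elim: C C' f g => [|x E|A1 IH1 A2 IH2|q1 A1 IH1 q2 A2 IH2|A1 IH1 p A2 IH2|phi A1 IH1 I]
  [|y E'|B1 B2|r1 B1 r2 B2|B1 p' B2|phi' B1 I'] f g //=.
- by move=> [<- <-] H s; exact: H.
- by move=> [h1 h2] H; apply: IH1 h1 _; exact: IH2.
- move=> [e1 [e2 [h1 h2]]] H s; apply: max_mono; apply: iv_mul_mono => //.
  + exact: IH1.
  + exact: IH2.
- move=> [<- [h1 h2]] H s; apply: add_mono; apply: mul_mono;
    (try exact: ennr_le_refl); [exact: IH1 | exact: IH2].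
- move=> [<- [<- h1]] H; move: IH1; case: star => IH1 /=; first exact: exp_le_refl.
  apply: lfp_mono => h s; apply: add_mono; apply: mul_mono;
    (try exact: ennr_le_refl); [exact: H | exact: IH1 h1 (exp_le_refl h) s].
Qed.

Lemma if_star_dwp (q1 q2 p1 p2 : pred_st) (a a' b b' : expect) s :
  q1 s || q2 s ->
  (q1 s -> p1 s && (p2 s ==> ennr_le (a s) (b s))) ->
  (q2 s -> p2 s && (p1 s ==> ennr_le (b s) (a s))) ->
  ennr_le (a' s) (a s) -> ennr_le (b' s) (b s) ->
  ennr_le (ennr_min (guard_exp q1 a' s) (guard_exp q2 b' s))
          (ennr_min (guard_exp p1 a s) (guard_exp p2 b s)).
Proof.
move=> Hq e1 e2; rewrite /ennr_le => Ha Hb; rewrite /= /guard_exp.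
case Hq1: (q1 s).
  have /andP [Hp1 Himp] := e1 Hq1.
  apply: (@le_trans _ _ (ev (a s))).
    by rewrite ge_min Ha.
  rewrite le_min Hp1 lexx /=; case Hp2: (p2 s); last exact: leey.
  by move: Himp; rewrite Hp2.
move: Hq; rewrite Hq1 /= => Hq2.
have /andP [Hp2 Himp] := e2 Hq2.
rewrite Hq2.
apply: (@le_trans _ _ (ev (b s))).
  by rewrite ge_min Hb orbT.
rewrite le_min Hp2 lexx andbT; case Hp1: (p1 s); last exact: leey.
by move: Himp; rewrite Hp1.
Qed.

Lemma if_star_awp (q1 q2 p1 p2 : pred_st) (a a' b b' : expect) s :
  q1 s || q2 s ->
  (q1 s -> p1 s && (p2 s ==> ennr_le (b s) (a s))) ->
  (q2 s -> p2 s && (p1 s ==> ennr_le (a s) (b s))) ->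
  ennr_le (a s) (a' s) -> ennr_le (b s) (b' s) ->
  ennr_le (ennr_max (ennr_mul (iverson p1 s) (a s)) (ennr_mul (iverson p2 s) (b s)))
          (ennr_max (ennr_mul (iverson q1 s) (a' s)) (ennr_mul (iverson q2 s) (b' s))).
Proof.
move=> Hq e1 e2; rewrite /ennr_le => Ha Hb; rewrite /= /iverson.
case Hq1: (q1 s).
  have /andP [Hp1 Himp] := e1 Hq1.
  apply: (@le_trans _ _ (ev (a s))); last first.
    by rewrite le_max /= mul1e Ha.
  rewrite ge_max Hp1 /= mul1e lexx /=; case Hp2: (p2 s) => /=.
    by rewrite mul1e; move: Himp; rewrite Hp2.
  by rewrite mul0e; exact: ev_ge0.
move: Hq; rewrite Hq1 /= => Hq2.
have /andP [Hp2 Himp] := e2 Hq2.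
rewrite Hq2.
apply: (@le_trans _ _ (ev (b s))); last first.
  by rewrite le_max /= mul1e Hb orbT.
rewrite ge_max Hp2 /= mul1e lexx andbT; case Hp1: (p1 s) => /=.
  by rewrite mul1e; move: Himp; rewrite Hp1.
by rewrite mul0e; exact: ev_ge0.
Qed.

Lemma star_dwp D : forall C' f, wf C' ->
  implS C' (trans Dwp cmp_preceq D f) ->
  exp_le (wpT Dwp true C' f) (wpT Dwp true D f).
Proof.
elim: D => [|x E|A1 IH1 A2 IH2|p1 A1 IH1 p2 A2 IH2|A1 IH1 p A2 IH2|phi A1 IH1 J]
  [|y E'|B1 B2|r1 B1 r2 B2|B1 p' B2|phi' B1 J'] f //=.
- by move=> _ _; exact: exp_le_refl.
- by move=> _ [-> ->]; exact: exp_le_refl.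
- move=> [w1 w2] [h1 h2].
  apply: exp_le_trans (_ : exp_le _ (wpT Dwp true B1 (wpT Dwp true A2 f))) _.
    apply: mono_dwp; first exact: implS_refl.
    exact: IH2.
  exact: IH1.
- move=> [v [w1 w2]] [e1 [e2 [h1 h2]]] s.
  apply: if_star_dwp.
  + exact: v.
  + exact: e1.
  + exact: e2.
  + exact: IH1.
  + exact: IH2.
- move=> [w1 w2] [<- [h1 h2]] s; apply: add_mono; apply: mul_mono;
    (try exact: ennr_le_refl); [exact: IH1 | exact: IH2].
- by move=> _ [_ [-> _]]; exact: exp_le_refl.
Qed.

Lemma star_awp D : forall C' f, wf C' ->
  implS C' (trans Awp cmp_succeq D f) ->
  exp_le (wpT Awp true D f) (wpT Awp true C' f).
Proof.
elim: D => [|x E|A1 IH1 A2 IH2|p1 A1 IH1 p2 A2 IH2|A1 IH1 p A2 IH2|phi A1 IH1 J]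
  [|y E'|B1 B2|r1 B1 r2 B2|B1 p' B2|phi' B1 J'] f //=.
- by move=> _ _; exact: exp_le_refl.
- by move=> _ [-> ->]; exact: exp_le_refl.
- move=> [w1 w2] [h1 h2].
  apply: exp_le_trans (_ : exp_le _ (wpT Awp true B1 (wpT Awp true A2 f))) _.
    exact: IH1.
  apply: mono_awp; first exact: implS_refl.
  exact: IH2.
- move=> [v [w1 w2]] [e1 [e2 [h1 h2]]] s.
  apply: if_star_awp.
  + exact: v.
  + exact: e1.
  + exact: e2.
  + exact: IH1.
  + exact: IH2.
- move=> [w1 w2] [<- [h1 h2]] s; apply: add_mono; apply: mul_mono;
    (try exact: ennr_le_refl); [exact: IH1 | exact: IH2].
- by move=> _ [_ [-> _]]; exact: exp_le_refl.
Qed.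

Theorem theorem6p7 (Pi : pgcl -> Prop) (Xi : expect -> Prop) (P : vcprovider) :
  (forall C, Pi C -> wf C) ->
  (demonically_complete P Pi Xi -> preserves_dwp P ->
     forall C f, Pi C -> Xi f ->
       exists D, reannot C D /\
         forall C', wf C' -> impl C' (trans_dwp D f) -> dwp D f = dwp C' f)
  /\
  (angelically_complete P Pi Xi -> preserves_awp P ->
     forall C f, Pi C -> Xi f ->
       exists D, reannot C D /\
         forall C', wf C' -> impl C' (trans_awp D f) -> awp D f = awp C' f).
Proof.
move=> HwfPi; split.
- move=> [Hub Hc] Hpres C f HC Hf.
  have [D [HR [Hvc Heq]]] := Hc C f HC Hf.
  have wD : wf D := reannot_wf HR (HwfPi C HC).
  exists D; split => // C' wC' Himp.
  have HS := impl_implS Himp.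
  have vC' := Hpres D C' f wD wC' Hvc Himp.
  have H1 := Hub C' f wC' vC'.
  have H2 := star_dwp wC' HS.
  have H3 : exp_le (dwp D f) (dwp C' f).
    apply: mono_dwp; last exact: exp_le_refl.
    exact: implS_trans HS (trans_implS _ _ _ _).
  have H4 : exp_le (dwp C' f) (dwp D f).
    rewrite Heq; exact: (exp_le_trans H1 H2).
  exact: (exp_eq H3 H4).
- move=> [Hlb Hc] Hpres C f HC Hf.
  have [D [HR [Hvc Heq]]] := Hc C f HC Hf.
  have wD : wf D := reannot_wf HR (HwfPi C HC).
  exists D; split => // C' wC' Himp.
  have HS := impl_implS Himp.
  have vC' := Hpres D C' f wD wC' Hvc Himp.
  have H1 := Hlb C' f wC' vC'.
  have H2 := star_awp wC' HS.
  have H3 : exp_le (awp C' f) (awp D f).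
    apply: mono_awp; last exact: exp_le_refl.
    exact: implS_trans HS (trans_implS _ _ _ _).
  have H4 : exp_le (awp D f) (awp C' f).
    rewrite Heq; exact: (exp_le_trans H2 H1).
  exact: (exp_eq H4 H3).
Qed.
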